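(* Let $d\ge 2$ and let $g:[-1,1]\to(-\infty,\infty]$ be a function that is finite and continuous on $[-1,1)$ with $g(1)=\lim_{t\to1^-}g(t)$, differentiable on $(-1,1)$, and such that $g''$ exists, is convex on $(-1,1)$ and is strictly positive on $(-1,1)$. Let $\omega_{2d}$ be an antipodal configuration of $2d$ points on $S^{d-1}$. Then $$P^g(\omega_{2d},S^{d-1})= d\left(g\left(\tfrac1{\sqrt d}\right)+g\left(-\tfrac1{\sqrt d}\right)\right)$$ holds if and only if $\omega_{2d}$ is the set of vertices of a regular cross-polytope inscribed in $S^{d-1}$, i.e. $\omega_{2d}=\{\pm\mathbf a_1,\ldots,\pm\mathbf a_d\}$ for some orthonormal basis $\{\mathbf a_1,\ldots,\mathbf a_d\}$ of $\mathbb R^d$.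
   Context: $S^{d-1}$ is the unit sphere in $\mathbb R^d$. A configuration is a list of points (points may coincide); it is antipodal if together with $\mathbf x$ it contains $-\mathbf x$. For a configuration $\omega_N=\{\mathbf x_1,\ldots,\mathbf x_N\}\subset S^{d-1}$, $P^g(\omega_N,S^{d-1}):=\min_{\mathbf x\in S^{d-1}}\sum_{i=1}^N g(\mathbf x\cdot\mathbf x_i)$. (Under these hypotheses one always has $P^g(\omega_{2d},S^{d-1})\le d(g(1/\sqrt d)+g(-1/\sqrt d))$ for antipodal $\omega_{2d}$.) *)

(* Defs.v *)
From HB Require Import structures.
From mathcomp Require Import all_boot all_order all_algebra.
From mathcomp Require Import all_classical all_reals all_analysis.
Set Implicit Arguments. Unset Strict Implicit. Unset Printing Implicit Defensive.
Import Order.TTheory GRing.Theory Num.Theory.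
Local Open Scope classical_set_scope.
Local Open Scope ring_scope.

Definition dotv (R : realType) (d : nat) (x y : 'rV[R]_d) : R :=
  \sum_(i < d) x ord0 i * y ord0 i.

Definition sphere (R : realType) (d : nat) : set 'rV[R]_d :=
  [set x | dotv x x = 1].

(* A configuration is a list of points (with repetitions); it is antipodal
   if -omega = omega as multisets. *)
Definition antipodal (R : realType) (d : nat) (w : seq 'rV[R]_d) : bool :=
  perm_eq w (map (fun x => - x) w).

(* P^g(omega, S^{d-1}) := min over x in the sphere of sum_i g(x . x_i),
   taken in the extended reals (written as the infimum, which is attained). *)
Definition polarization (R : realType) (d : nat) (g : R -> \bar R)
    (w : seq 'rV[R]_d) : \bar R :=
  ereal_inf [set (\sum_(y <- w) g (dotv x y))%E | x in @sphere R d].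

Definition cross_polytope (R : realType) (d : nat) (w : seq 'rV[R]_d) : Prop :=
  exists a : 'I_d -> 'rV[R]_d,
    (forall i j, dotv (a i) (a j) = (i == j)%:R) /\
    perm_eq w ([seq a k | k <- enum 'I_d] ++ [seq - a k | k <- enum 'I_d]).

(* The real-valued function underlying g (meaningful where g is finite). *)
Definition greal (R : realType) (g : R -> \bar R) : R -> R := fun t => fine (g t).

(* Main.v *)
Require Import Defs.
From HB Require Import structures.
From mathcomp Require Import all_boot all_order all_algebra.
From mathcomp Require Import all_classical all_reals all_analysis.
From mathcomp Require Import ring lra zify.
Import Order.TTheory GRing.Theory Num.Theory.
Local Open Scope classical_set_scope.
Local Open Scope ring_scope.

Section Ana.
Variable R : realType.

Lemma dcompN (f : R -> R) (df x : R) : is_derive (-x) 1 f df ->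
  is_derive x 1 (fun t => f (-t)) (- df).
Proof.
move=> hf.
have hd : derivable (-%R : R -> R) x 1 := @ex_derive _ _ _ _ _ _ _ (is_deriveNid x 1).
have hdf : derivable f (- x) 1 := @ex_derive _ _ _ _ _ _ _ hf.
have hcomp : derivable (f \o -%R) x 1.
  apply/derivable1_diffP; apply: differentiable_comp.
  - exact/derivable1_diffP.
  - exact/derivable1_diffP.
apply: DeriveDef => //.
have := derive1_comp hd hdf.
rewrite !derive1E /= => ->.
rewrite (@derive_val _ _ _ _ _ _ _ hf).
have := @derive_val _ _ _ x 1 (-%R : R -> R) _ (is_deriveNid x 1).
move=> ->; by rewrite mulrN1.
Qed.

Lemma mvt_in (f df : R -> R) (a b : R) : -1 < a -> a < b -> b < 1 ->
  (forall t : R, -1 < t < 1 -> is_derive t 1 f (df t)) ->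
  exists2 c, a < c < b & f b - f a = df c * (b - a).
Proof.
move=> ha ab hb hd.
have H1 : forall x, x \in `]a, b[%R -> is_derive x 1 f (df x).
  move=> x; rewrite in_itv /= => /andP[h1 h2]; apply: hd.
  apply/andP; split; lra.
have H2 : {in `[a, b]%R, forall x, derivable f x 1}.
  move=> x; rewrite in_itv /= => /andP[h1 h2].
  apply: (@ex_derive _ _ _ _ _ _ _ (hd x _)); apply/andP; split; lra.
have [c cab ->] := @MVT R f df a b ab H1 (derivable_within_continuous H2).
by exists c => //; move: cab; rewrite in_itv.
Qed.

Arguments mvt_in {f df a b}.

Variables (G G1 G2 : R -> R).
Hypothesis dG : forall t : R, -1 < t < 1 -> is_derive t 1 G (G1 t).
Hypothesis dG1 : forall t : R, -1 < t < 1 -> is_derive t 1 G1 (G2 t).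
Hypothesis G2pos : forall t : R, -1 < t < 1 -> 0 < G2 t.
Hypothesis G2conv : forall {x y l : R}, -1 < x < 1 -> -1 < y < 1 -> 0 <= l <= 1 ->
  G2 (l * x + (1 - l) * y) <= l * G2 x + (1 - l) * G2 y.

Lemma G1_incr (a b : R) : -1 < a -> a < b -> b < 1 -> G1 a < G1 b.
Proof.
move=> ha ab hb; have [c /andP[c1 c2] e] := mvt_in ha ab hb dG1.
have : 0 < G2 c * (b - a).
  apply: mulr_gt0; last lra.
  apply: G2pos; apply/andP; split; lra.
lra.
Qed.

Lemma F_incr (s t : R) : 0 <= s -> s < t -> t < 1 -> G s + G (- s) < G t + G (- t).
Proof.
move=> s0 st t1.
have hs : -1 < s by lra.
have [c1 /andP[c11 c12] e1] := mvt_in hs st t1 dG.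
have ht : -1 < - t by lra.
have hts : - t < - s by lra.
have hs1 : - s < 1 by lra.
have [c2 /andP[c21 c22] e2] := mvt_in ht hts hs1 dG.
have h : G1 c2 < G1 c1 by apply: G1_incr; lra.
have : 0 < (G1 c1 - G1 c2) * (t - s) by apply: mulr_gt0; lra.
move: e2; have -> : - s - - t = t - s by lra.
move=> e2; lra.
Qed.

Lemma DDF_mono (s t : R) : 0 <= s -> s <= t -> t < 1 ->
  G2 s + G2 (- s) <= G2 t + G2 (- t).
Proof.
move=> s0 st t1.
have [te|t0] := eqVneq t 0.
  by subst t; have -> : s = 0 by lra.
have tp : 0 < t by lra.
set l := (t + s) / (2 * t).
have l0 : 0 <= l by rewrite /l; apply: divr_ge0; lra.
have l1 : l <= 1 by rewrite /l ler_pdivrMr ?mul1r; lra.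
have ht : -1 < t < 1 by apply/andP; split; lra.
have hmt : -1 < - t < 1 by apply/andP; split; lra.
have e1 : s = l * t + (1 - l) * - t by rewrite /l; field; lra.
have e2 : - s = (1 - l) * t + (1 - (1 - l)) * - t by rewrite /l; field; lra.
have hl : 0 <= l <= 1 by apply/andP; split; lra.
have hl' : 0 <= 1 - l <= 1 by apply/andP; split; lra.
have i1 := G2conv ht hmt hl.
have i2 := G2conv ht hmt hl'.
rewrite -e1 in i1; rewrite -e2 in i2.
lra.
Qed.

Definition DF (t : R) := G1 t - G1 (- t).
Definition DDF (t : R) := G2 t + G2 (- t).

Lemma dF (t : R) : -1 < t < 1 -> is_derive t 1 (fun x => G x + G (- x)) (DF t).
Proof.
move=> /andP[h1 h2].
have a1 : is_derive t 1 G (G1 t) by apply: dG; apply/andP; split; lra.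
have a2 : is_derive t 1 (fun x => G (- x)) (- G1 (- t)).
  by apply: dcompN; apply: dG; apply/andP; split; lra.
have := is_deriveD a1 a2.
by rewrite /DF.
Qed.

Lemma dDF (t : R) : -1 < t < 1 -> is_derive t 1 DF (DDF t).
Proof.
move=> /andP[h1 h2].
have a1 : is_derive t 1 G1 (G2 t) by apply: dG1; apply/andP; split; lra.
have a2 : is_derive t 1 (fun x => G1 (- x)) (- G2 (- t)).
  by apply: dcompN; apply: dG1; apply/andP; split; lra.
have := is_deriveB a1 a2.
by rewrite /DF /DDF opprK.
Qed.

Lemma DF0 : DF 0 = 0.
Proof. by rewrite /DF oppr0 subrr. Qed.

Lemma DF_ratio (a b : R) : 0 < a -> a < b -> b < 1 -> DF a / a <= DF b / b.
Proof.
move=> a0 ab b1.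
have hm1 : -1 < 0 :> R by lra.
have a1 : a < 1 by lra.
have [c1 /andP[c11 c12] e1] := mvt_in hm1 a0 a1 dDF.
have hma : -1 < a by lra.
have [c2 /andP[c21 c22] e2] := mvt_in hma ab b1 dDF.
rewrite DF0 !subr0 in e1.
have hm : DDF c1 <= DDF c2 by rewrite /DDF; apply: DDF_mono; lra.
have hp : 0 <= (DDF c2 - DDF c1) * (b - a) by apply: mulr_ge0; lra.
rewrite e1 mulfK; last by rewrite gt_eqF.
rewrite ler_pdivlMr; last lra.
have eb : DF b = DDF c1 * a + DDF c2 * (b - a) by lra.
rewrite eb; lra.
Qed.

Lemma tangent_pos (c t : R) : 0 < c < 1 -> 0 <= t < 1 ->
  G c + G (- c) + DF c / (2 * c) * (t ^+ 2 - c ^+ 2) <= G t + G (- t).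
Proof.
move=> /andP[c0 c1] /andP[t0 t1].
set K := DF c / (2 * c).
pose H := fun x : R => G x + G (- x) - K * (x * x).
have dH : forall x : R, -1 < x < 1 -> is_derive x 1 H (DF x - K * (x + x)).
  move=> x hx.
  have := is_deriveB (dF x hx) (is_deriveZ K (is_deriveM (is_derive_id x 1) (is_derive_id x 1))).
  move=> h; apply: (is_derive_eq h).
  by rewrite /= !scaler1.
have key : forall x, 0 < x < 1 -> DF x - K * (x + x) = x * (DF x / x - DF c / c).
  move=> x /andP[x0 x1]; rewrite /K; field; lra.
have eH : forall x, H x = G x + G (- x) - K * (x * x) by [].
have [tc|tc] := leP c t.
  have [tc'|tc'] := eqVneq t c.
    by subst t; rewrite subrr mulr0 addr0.
  have ct : c < t by rewrite lt_neqAle eq_sym tc' tc.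
  have hmc : -1 < c by lra.
  have [x /andP[x1 x2] e] := mvt_in hmc ct t1 dH.
  rewrite !eH key in e; last by apply/andP; split; lra.
  have hr : DF c / c <= DF x / x by apply: DF_ratio; lra.
  have : 0 <= x * (DF x / x - DF c / c) * (t - c).
    by apply: mulr_ge0; [apply: mulr_ge0; lra | lra].
  rewrite -e !expr2; lra.
have hmt : -1 < t by lra.
have [x /andP[x1 x2] e] := mvt_in hmt tc c1 dH.
rewrite !eH key in e; last by apply/andP; split; lra.
have hr : DF x / x <= DF c / c by apply: DF_ratio; lra.
have : 0 <= x * (DF c / c - DF x / x) * (c - t).
  by apply: mulr_ge0; [apply: mulr_ge0; lra | lra].
have -> : x * (DF c / c - DF x / x) * (c - t) = - (x * (DF x / x - DF c / c) * (c - t)) by ring.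
rewrite -e !expr2; lra.
Qed.

Lemma tangent (c t : R) : 0 < c < 1 -> -1 < t < 1 ->
  G c + G (- c) + DF c / (2 * c) * (t ^+ 2 - c ^+ 2) <= G t + G (- t).
Proof.
move=> hc /andP[t0 t1].
have [tp|tn] := leP 0 t.
  by apply: tangent_pos => //; apply/andP; split.
have ht : 0 <= - t < 1 by apply/andP; split; lra.
have := @tangent_pos c (- t) hc ht.
by rewrite sqrrN opprK [G t + _]addrC.
Qed.

End Ana.
Section Lim.
Import numFieldNormedType.Exports.
Variable R : realType.

Lemma left_within (g : R -> \bar R) :
  {within `[-1, 1], continuous g} -> g @ 1^'- --> g 1.
Proof.
move=> hc.
have h := (proj1 (subspace_continuousP _ _) hc) 1.
have hb : `[-1, 1]%classic (1:R) by rewrite /= in_itv /= lexx andbT; lra.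
apply: cvg_trans (h hb); apply: cvg_app.
move=> U; rewrite !nbhs_simpl => hU.
have hU' := @cvg_within R (nbhs (1:R)) _ (fun u : R => u < 1) _ hU.
change (\forall y \near (1:R)^'-, U y).
have hm : (-1 : R) < 1 by lra.
near=> y.
apply: (near (hU' _) y) => //.
rewrite /= in_itv /=; apply/andP; split.
  apply: ltW; near: y; exact: nbhs_left_gt.
apply: ltW; near: y; exact: nbhs_left_lt.
Unshelve. all: by end_near.
Qed.

Lemma right_within (g : R -> \bar R) :
  {within `[-1, 1], continuous g} -> g @ (-1)^'+ --> g (-1).
Proof.
move=> hc.
have h := (proj1 (subspace_continuousP _ _) hc) (-1).
have hb : `[-1, 1]%classic (-1:R) by rewrite /= in_itv /= lexx /=; lra.
apply: cvg_trans (h hb); apply: cvg_app.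
move=> U; rewrite !nbhs_simpl => hU.
have hU' := @cvg_within R (nbhs (-1:R)) _ (fun u : R => -1 < u) _ hU.
change (\forall y \near (-1:R)^'+, U y).
have hm : (-1 : R) < 1 by lra.
near=> y.
apply: (near (hU' _) y) => //.
rewrite /= in_itv /=; apply/andP; split.
  apply: ltW; near: y; exact: nbhs_right_gt.
apply: ltW; near: y; exact: nbhs_right_lt.
Unshelve. all: by end_near.
Qed.


Lemma endpoint (g : R -> \bar R) (M K : R) :
  {within `[-1, 1], continuous g} -> g (-1) \is a fin_num ->
  (forall t : R, -1 < t < 1 -> g t \is a fin_num) ->
  (forall t : R, -1 < t < 1 -> ((M + K * t ^+ 2)%:E <= g t + g (- t)%R)%E) ->
  ((M + K)%:E <= g 1%R + g (-1)%R)%E.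
Proof.
move=> hc hm1 hfin hle.
have c1 := left_within g hc.
have c2 : (fun t => g (- t)) @ 1^'- --> g (-1).
  apply/cvg_at_leftNP.
  have -> : (fun t => g (- t)) \o -%R = g by apply: funext => t /=; rewrite opprK.
  exact: right_within g hc.
have c3 : (fun t : R => (K * t ^+ 2)%:E) @ 1^'- --> K%:E.
  apply: cvg_EFin; first by near=> t.
  have -> : fine \o (fun t : R => (K * t ^+ 2)%:E) = (fun t => K * t ^+ 2) by [].
  have hct : continuous (fun t : R => K * t ^+ 2).
    move=> x; apply: cvgM; [exact: cvg_cst | exact: exprn_continuous].
  have h : (fun t : R => K * t ^+ 2) @ (1:R) --> K * 1 ^+ 2 := hct 1.
  rewrite expr1n mulr1 in h.
  exact: cvg_within_filter h.
have hK : (- K%:E)%E \is a fin_num by [].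
have c4 := @cvgeD _ _ (at_left_proper_filter (1:R)) _ _ _ _ _ (fin_num_adde_defl _ hm1) c1 c2.
have c5 := @cvgeD _ _ (at_left_proper_filter (1:R)) _ _ _ _ _ (fin_num_adde_defl _ hK) c4 (cvgeN c3).
have c6 := c5 (at_left_proper_filter (1:R)).
have := @closed_cvg _ _ _ _ _ [set y | (M%:E <= y)%E] (@closed_ereal_le_ereal R M%:E) _ _ c6.

move=> /(_ (at_left_proper_filter (1:R))) h.
have : (M%:E <= g 1%R + g (-1)%R - K%:E)%E.
  apply: h.

have hm : (-1 : R) < 1 by lra.
near=> t.
have ht : -1 < t < 1.
  apply/andP; split; near: t; [exact: nbhs_left_gt | exact: nbhs_left_lt].
change (M%:E <= g t + g (- t)%R - (K * t ^+ 2)%:E)%E.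
rewrite leeBrDr // -EFinD; exact: hle.
by move=> h2; rewrite leeBrDr // -EFinD in h2.
Unshelve. all: try by end_near.
Qed.
End Lim.
Section Alg.
Variable R : realType.
Variable d : nat.
Implicit Types x y z : 'rV[R]_d.

Lemma dotvE x y : dotv x y = (x *m y^T) 0 0.
Proof. by rewrite /dotv mxE; apply: eq_bigr => i _; rewrite mxE. Qed.

Lemma dotvC x y : dotv x y = dotv y x.
Proof. by rewrite /dotv; apply: eq_bigr => i _; rewrite mulrC. Qed.

Lemma dotvDl x y z : dotv (x + y) z = dotv x z + dotv y z.
Proof. by rewrite /dotv -big_split; apply: eq_bigr => i _; rewrite mxE mulrDl. Qed.

Lemma dotvDr x y z : dotv z (x + y) = dotv z x + dotv z y.
Proof. by rewrite dotvC dotvDl !(dotvC z). Qed.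

Lemma dotvZl (a : R) x y : dotv (a *: x) y = a * dotv x y.
Proof. by rewrite /dotv mulr_sumr; apply: eq_bigr => i _; rewrite mxE mulrA. Qed.

Lemma dotvZr (a : R) x y : dotv y (a *: x) = a * dotv y x.
Proof. by rewrite dotvC dotvZl dotvC. Qed.

Lemma dotvNl x y : dotv (- x) y = - dotv x y.
Proof. by rewrite -scaleN1r dotvZl mulN1r. Qed.

Lemma dotvNr x y : dotv y (- x) = - dotv y x.
Proof. by rewrite dotvC dotvNl dotvC. Qed.

Lemma dotvBl x y z : dotv (x - y) z = dotv x z - dotv y z.
Proof. by rewrite dotvDl dotvNl. Qed.

Lemma dotv_suml (I : Type) (r : seq I) (P : pred I) (F : I -> 'rV[R]_d) y :
  dotv (\sum_(i <- r | P i) F i) y = \sum_(i <- r | P i) dotv (F i) y.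
Proof.
elim/big_rec2: _ => [|i a b _ <-]; last by rewrite dotvDl.
by rewrite /dotv big1 // => j _; rewrite mxE mul0r.
Qed.

Lemma dotv_sumr (I : Type) (r : seq I) (P : pred I) (F : I -> 'rV[R]_d) y :
  dotv y (\sum_(i <- r | P i) F i) = \sum_(i <- r | P i) dotv y (F i).
Proof. by rewrite dotvC dotv_suml; apply: eq_bigr => i _; rewrite dotvC. Qed.

Lemma dotv_ge0 x : 0 <= dotv x x.
Proof. by rewrite /dotv; apply: sumr_ge0 => i _; rewrite -expr2 sqr_ge0. Qed.

Lemma dotv_eq0 x : dotv x x = 0 -> x = 0.
Proof.
move=> h; apply/rowP => j; rewrite mxE.
have := h; rewrite /dotv => /eqP; rewrite psumr_eq0; last first.
  by move=> i _; rewrite -expr2 sqr_ge0.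
move=> /allP /(_ j (mem_index_enum _)) /implyP /(_ isT).
by rewrite mulf_eq0 orbb => /eqP.
Qed.

Lemma dotv_gt0 x : x != 0 -> 0 < dotv x x.
Proof.
move=> hx; rewrite lt_neqAle dotv_ge0 andbT eq_sym.
by apply/eqP => /dotv_eq0 h; rewrite h eqxx in hx.
Qed.

Lemma normalize x : x != 0 ->
  let u := (Num.sqrt (dotv x x))^-1 *: x in
  dotv u u = 1 /\ forall y, dotv u y = (Num.sqrt (dotv x x))^-1 * dotv x y.
Proof.
move=> hx u; have hp := dotv_gt0 x hx.
have hs : 0 < Num.sqrt (dotv x x) by rewrite sqrtr_gt0.
split; last by move=> y; rewrite /u dotvZl.
rewrite /u dotvZl dotvZr mulrA -expr2 exprVn sqr_sqrtr; last exact: ltW.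
by rewrite mulVf // gt_eqF.
Qed.


Lemma opp_neq x : x != 0 -> - x != x.
Proof.
move=> hx; apply/eqP => h.
have : (2 : R) *: x = 0 by rewrite scaler_nat mulr2n -{1}h addNr.
move/eqP; rewrite scaler_eq0 => /orP[|]; last by move/eqP => e; rewrite e eqxx in hx.
by rewrite pnatr_eq0.
Qed.

Lemma anti_decomp_n n (w : seq 'rV[R]_d) : (size w <= n)%N -> antipodal w ->
  (forall x, x \in w -> x != 0) -> exists ys, perm_eq w (ys ++ map -%R ys).
Proof.
elim: n w => [|n IH] w.
  by rewrite leqn0 => /nilP -> _ _; exists [::].
case: w => [|y w'] hs ha hnz; first by exists [::].
rewrite /antipodal in ha.
have hy : y != 0 by apply: hnz; rewrite inE eqxx.
have my : - y \in w'.
  have : y \in map -%R (y :: w') by rewrite -(perm_mem ha) inE eqxx.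
  rewrite -{1}(opprK y) (mem_map oppr_inj) inE => /orP[|] //.
  by move=> /eqP e; have := opp_neq y hy; rewrite e eqxx.
set w2 := rem (- y) w'.
have p1 : perm_eq w' (- y :: w2) by apply: perm_to_rem.
have p2 : perm_eq (y :: w') (y :: - y :: w2) by rewrite perm_cons.
have a2 : antipodal w2.
  rewrite /antipodal.
  have p2s : perm_eq (y :: - y :: w2) (y :: w') by rewrite perm_sym.
  have := perm_trans (perm_trans p2s ha) (perm_map -%R p2).
  rewrite /= opprK => h.
  have hc : perm_eq ([:: - y] ++ [:: y] ++ map -%R w2) ([:: y] ++ [:: - y] ++ map -%R w2).
    by apply/permPl; exact: perm_catCA.
  have h2 := perm_trans h hc.
  by rewrite /= !perm_cons in h2.
have [ys2 hys2] : exists ys, perm_eq w2 (ys ++ map -%R ys).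
  apply: IH => //.
  - by rewrite size_rem //; apply: leq_trans (leq_pred _) _; rewrite -ltnS.
  - by move=> x hx; apply: hnz; rewrite inE (mem_rem hx) orbT.
exists (y :: ys2).
apply: (perm_trans p2); rewrite /= perm_cons.
apply: (perm_trans (_ : perm_eq _ (- y :: (ys2 ++ map -%R ys2)))).
  by rewrite perm_cons.
have hc : perm_eq ([:: - y] ++ ys2 ++ map -%R ys2) (ys2 ++ [:: - y] ++ map -%R ys2).
  by apply/permPl; exact: perm_catCA.
exact: hc.
Qed.


Lemma anti_decomp (w : seq 'rV[R]_d) : size w = (2 * d)%N -> antipodal w ->
  (forall x, x \in w -> x != 0) ->
  exists a : 'I_d -> 'rV[R]_d,
    perm_eq w ([seq a k | k <- enum 'I_d] ++ [seq - a k | k <- enum 'I_d]).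
Proof.
move=> hs ha hnz.
have [ys hys] := @anti_decomp_n (size w) w (leqnn (size w)) ha hnz.
have hsz : size ys = d.
  have := perm_size hys; rewrite size_cat size_map hs => /eqP.
  set m := size ys; move=> /eqP h; lia.
exists (fun k => nth 0 ys k).
have e1 : [seq nth 0 ys (k : nat) | k : 'I_d <- enum 'I_d] = ys.
  rewrite (_ : [seq nth 0 ys (k : nat) | k : 'I_d <- enum 'I_d] = map (nth 0 ys) (map val (enum 'I_d))); last by rewrite -map_comp.
  by rewrite val_enum_ord; have := mkseq_nth 0 ys; rewrite hsz.
have e2 : [seq - nth 0 ys (k : nat) | k : 'I_d <- enum 'I_d] = map -%R ys.
  by rewrite -[in RHS]e1 -[in RHS]map_comp.
by rewrite e1 e2.
Qed.

Lemma sum_decomp (g : R -> \bar R) (w : seq 'rV[R]_d) (a : 'I_d -> 'rV[R]_d) x :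
  perm_eq w ([seq a k | k <- enum 'I_d] ++ [seq - a k | k <- enum 'I_d]) ->
  (\sum_(y <- w) g (dotv x y) = \sum_(k < d) (g (dotv x (a k)) + g (- dotv x (a k))%R))%E.
Proof.
move=> hp; rewrite (perm_big _ hp) big_cat !big_map /= big_split /=.

rewrite -enumT; congr (_ + _)%E; rewrite big_enum /=; apply: eq_big => // k _.
by rewrite dotvNr.
Qed.


Lemma signs n (z : 'I_n -> 'rV[R]_d) : exists e : 'I_n -> R,
  (forall j, e j = 1 \/ e j = -1) /\
  \sum_j dotv (z j) (z j) <= dotv (\sum_j e j *: z j) (\sum_j e j *: z j).
Proof.
elim: n z => [|n IH] z.
  exists (fun _ => 1); split; first by left.
  by rewrite !big_ord0 /dotv big1 // => i _; rewrite mxE mul0r.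
have [e' [he' hle]] := IH (fun j => z (widen_ord (leqnSn n) j)).
set v := \sum_j e' j *: z (widen_ord (leqnSn n) j) in hle.
set s : R := if 0 <= dotv v (z ord_max) then 1 else -1.
exists (fun j : 'I_n.+1 => if unlift ord_max j is Some k then e' k else s).
split.
  move=> j; case: (unlift ord_max j) => [k|]; first exact: he'.
  by rewrite /s; case: ifP => _; [left | right].
rewrite !big_ord_recr /=.
have -> : \sum_(i < n) (if unlift ord_max (widen_ord (leqnSn n) i) is Some k then e' k else s) *: z (widen_ord (leqnSn n) i) = v.
  apply: eq_bigr => i _.
  have -> : widen_ord (leqnSn n) i = lift ord_max i.
    by apply: val_inj; rewrite /= /bump leqNgt ltn_ord.
  by rewrite liftK.
rewrite unlift_none.
have hs2 : s * s = 1 by rewrite /s; case: ifP => _; rewrite ?mulr1 ?mulrNN ?mulr1.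
have hsp : 0 <= s * dotv v (z ord_max).
  rewrite /s; case: ifP => h; first by rewrite mul1r.
  by rewrite mulN1r oppr_ge0; apply: ltW; rewrite ltNge h.
rewrite !dotvDl !dotvDr !dotvZl !dotvZr (dotvC (z ord_max) v).
have : dotv (z ord_max) (z ord_max) = s * (s * dotv (z ord_max) (z ord_max)).
  by rewrite mulrA hs2 mul1r.
lra.
Qed.


Definition rmx (a : 'I_d -> 'rV[R]_d) : 'M[R]_d := \matrix_(i, j) a i 0 j.

Lemma rmx_dot (a : 'I_d -> 'rV[R]_d) x i : dotv x (a i) = (x *m (rmx a)^T) 0 i.
Proof. by rewrite mxE; apply: eq_bigr => j _; rewrite !mxE. Qed.

Lemma parseval (a : 'I_d -> 'rV[R]_d) :
  (forall i j, dotv (a i) (a j) = (i == j)%:R) ->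
  forall x, \sum_k dotv x (a k) ^+ 2 = dotv x x.
Proof.
move=> ho x.
have AAt : rmx a *m (rmx a)^T = 1%:M.
  apply/matrixP => i j; rewrite !mxE -ho /dotv; apply: eq_bigr => k _.
  by rewrite !mxE.
have AtA := mulmx1C AAt.
set u := x *m (rmx a)^T.
have -> : \sum_k dotv x (a k) ^+ 2 = dotv u u.
  by rewrite [RHS]/dotv; apply: eq_bigr => k _; rewrite rmx_dot expr2.
rewrite !dotvE /u trmx_mul trmxK -!mulmxA (mulmxA (rmx a)^T) AtA mul1mx.
by [].
Qed.

Lemma sum_delta (e : 'I_d -> R) i : \sum_j e j * (j == i)%:R = e i.
Proof.
rewrite (bigD1 i) //= eqxx mulr1 big1 ?addr0 // => j /negbTE ->.
by rewrite mulr0.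
Qed.

Lemma key (a : 'I_d -> 'rV[R]_d) : (0 < d)%N ->
  (forall i, dotv (a i) (a i) = 1) ->
  ~ (forall i j, dotv (a i) (a j) = (i == j)%:R) ->
  exists x s, [/\ dotv x x = 1, 0 <= s, s < (Num.sqrt d%:R)^-1 &
    forall i, dotv x (a i) = s \/ dotv x (a i) = - s].
Proof.
move=> d0 hn hno.
have sd0 : 0 < Num.sqrt (d%:R : R) by rewrite sqrtr_gt0 ltr0n.
set Y := rmx a.
have [/det0P [v v0 hv]|hdet] := boolP (\det Y^T == 0).
  have [h1 h2] := normalize v v0.
  exists ((Num.sqrt (dotv v v))^-1 *: v), 0; split => //.
  - by rewrite invr_gt0.
  - move=> i; left; rewrite h2 rmx_dot hv mxE mulr0 //.
have hY : Y \in unitmx by rewrite unitmxE unitfE -det_tr.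
set Z := invmx Y.
have YZ : Y *m Z = 1%:M by apply: mulmxV.
pose zr (j : 'I_d) : 'rV[R]_d := \row_k Z k j.
have hdz : forall i j, dotv (a i) (zr j) = (i == j)%:R.
  move=> i j; have := congr1 (fun (M : 'M[R]_d) => M i j) YZ; rewrite !mxE => <-.
  by apply: eq_bigr => k _; rewrite !mxE.
have hsum : \sum_j dotv (zr j) (zr j) = d%:R + \sum_j dotv (zr j - a j) (zr j - a j).
  have -> : d%:R = \sum_(j < d) (1 : R) by rewrite sumr_const card_ord.
  rewrite -big_split /=; apply: eq_bigr => j _.
  rewrite !dotvBl !dotvDr !dotvNr (dotvC (zr j) (a j)) hdz hn eqxx.
  rewrite /= ; lra.
have [j hj] : exists j, zr j != a j.
  apply: contrapT => hall; apply: hno => i j.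
  case: (eqVneq (zr j) (a j)) => [e|ne]; first by rewrite -e hdz.
  by exfalso; apply: hall; exists j.
have hpos : 0 < \sum_j dotv (zr j - a j) (zr j - a j).
  rewrite (bigD1 j) //=; apply: ltr_pwDl; first by apply: dotv_gt0; rewrite subr_eq0.
  by apply: sumr_ge0 => k _; apply: dotv_ge0.
have [e [he hle]] := signs d zr.
set v := \sum_j e j *: zr j in hle.
have hvd : d%:R < dotv v v by lra.
have v0 : v != 0.
  apply/eqP => h; move: hvd; rewrite h /dotv big1 ?ltr0n ?ltNge ?ler0n //.
  by move=> k _; rewrite mxE mul0r.
have [h1 h2] := normalize v v0.
have hva : forall i, dotv v (a i) = e i.
  move=> i; rewrite dotv_suml -(sum_delta e i); apply: eq_bigr => k _.
  by rewrite dotvZl dotvC hdz eq_sym.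
have hvp : 0 < Num.sqrt (dotv v v) by rewrite sqrtr_gt0; apply: lt_trans hvd; rewrite ltr0n.
exists ((Num.sqrt (dotv v v))^-1 *: v), (Num.sqrt (dotv v v))^-1; split => //.
- have d0r : (0:R) < d%:R by rewrite ltr0n.
  by rewrite ltf_pV2 ?posrE // ltr_sqrt //; lra.
- move=> i; rewrite h2 hva; case: (he i) => ->; [left | right]; rewrite ?mulr1 ?mulrN1 //.
Qed.
End Alg.
Theorem corollary3p4 (R : realType) (d : nat) (g : R -> \bar R)
  (hd : (2 <= d)%N)
  (hfin : forall t : R, -1 <= t < 1 -> g t \is a fin_num)
  (h1 : g 1 != -oo%E)
  (hcont : {within `[-1, 1], continuous g})
  (hder1 : forall t : R, -1 < t < 1 -> derivable (greal g) t 1)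
  (hder2 : forall t : R, -1 < t < 1 -> derivable (derive1 (greal g)) t 1)
  (hconv : forall (x y l : R), -1 < x < 1 -> -1 < y < 1 -> 0 <= l <= 1 ->
     (derive1n 2 (greal g)) (l * x + (1 - l) * y)
       <= l * (derive1n 2 (greal g)) x + (1 - l) * (derive1n 2 (greal g)) y)
  (hpos : forall t : R, -1 < t < 1 -> 0 < (derive1n 2 (greal g)) t)
  (w : seq 'rV[R]_d)
  (hsize : size w = (2 * d)%N)
  (hsph : forall x, x \in w -> @sphere R d x)
  (hanti : antipodal w) :
  polarization g w
    = ((d%:R)%:E * (g ((Num.sqrt d%:R)^-1)%R + g (- (Num.sqrt d%:R)^-1)%R))%E
  <-> cross_polytope w.
Proof.
set G := greal g.
set G1 := derive1 G.
set G2 := derive1 G1.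
have eG2 : derive1n 2 G = G2 by [].
rewrite eG2 in hconv hpos.
have dG : forall t : R, -1 < t < 1 -> is_derive t 1 G (G1 t).
  by move=> t ht; apply: DeriveDef; [exact: hder1 | rewrite /G1 derive1E].
have dG1 : forall t : R, -1 < t < 1 -> is_derive t 1 G1 (G2 t).
  by move=> t ht; apply: DeriveDef; [exact: hder2 | rewrite /G2 derive1E].
have hgE : forall t : R, -1 < t < 1 -> g t = (G t)%:E.
  move=> t /andP[t1 t2]; rewrite /G /greal fineK //; apply: hfin.
  by apply/andP; split => //; apply: ltW.
have d0 : (0 < d)%N by lia.
have dR : (1 : R) < d%:R by rewrite ltr1n.
set c : R := (Num.sqrt d%:R)^-1.
have sd : 1 < Num.sqrt (d%:R : R) by rewrite -[X in X < _]sqrtr1 ltr_sqrt //; lra.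
have c0 : 0 < c by rewrite invr_gt0; lra.
have c1 : c < 1 by rewrite invf_lt1 //; lra.
have cc : c ^+ 2 * d%:R = 1.
  by rewrite /c exprVn sqr_sqrtr ?ler0n // mulVf // gt_eqF // ltr0n.
have hc : -1 < c < 1 by apply/andP; split; lra.
have hmc : -1 < - c < 1 by apply/andP; split; lra.
set Fc := G c + G (- c).
set K := DF R G1 c / (2 * c).
have eV : ((d%:R)%:E * (g c + g (- c)%R))%E = (d%:R * Fc)%:E.
  by rewrite (hgE c hc) (hgE (- c) hmc) -EFinD -EFinM.
rewrite -/c eV.
have tang : forall t : R, -1 < t < 1 -> Fc + K * (t ^+ 2 - c ^+ 2) <= G t + G (- t).
  move=> t ht; rewrite /Fc /K.
  have hc' : 0 < c < 1 by apply/andP; split.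
  exact: (@tangent _ _ _ _ dG dG1 hconv _ _ hc' ht).
have hm1 : g (-1) \is a fin_num by apply: hfin; rewrite lexx /=; lra.
have pt : forall t : R, -1 <= t <= 1 ->
    ((Fc + K * (t ^+ 2 - c ^+ 2))%:E <= g t + g (- t)%R)%E.
  have end1 : ((Fc + K * (1 ^+ 2 - c ^+ 2))%:E <= g 1%R + g (-1)%R)%E.
    have := @endpoint R g (Fc - K * c ^+ 2) K hcont hm1 _ _.
    have -> : Fc + K * (1 ^+ 2 - c ^+ 2) = Fc - K * c ^+ 2 + K by rewrite expr1n; ring.
    apply.
    - by move=> t /andP[t1 t2]; apply: hfin; apply/andP; split => //; apply: ltW.
    - move=> t ht.
      have hmt : -1 < - t < 1 by case/andP: ht => ? ?; apply/andP; split; lra.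
      rewrite (hgE t ht) (hgE (- t) hmt) -EFinD lee_fin.
      have := tang t ht; lra.
  move=> t /andP[ta tb].
  have [->|t1] := eqVneq t 1; first exact: end1.
  have [->|t2] := eqVneq t (-1).
    by rewrite opprK addeC sqrrN.
  have ht : -1 < t < 1 by apply/andP; split; rewrite lt_neqAle ?t1 ?ta ?tb // eq_sym t2.
  have hmt : -1 < - t < 1 by case/andP: ht => ? ?; apply/andP; split; lra.
  rewrite (hgE t ht) (hgE (- t) hmt) -EFinD lee_fin.
  exact: tang.
have sdot : forall x, @sphere R d x -> dotv x x = 1 by [].
split.
- move=> hP.
  apply: contrapT => hnc.
  have hnz : forall x, x \in w -> x != 0.
    move=> x /hsph /sdot hx; apply/eqP => e; move: hx; rewrite e /dotv big1.
      by move=> /esym /eqP; rewrite oner_eq0.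
    by move=> i _; rewrite mxE mul0r.
  have [a hpa] := @anti_decomp R d w hsize hanti hnz.
  have hn : forall i, dotv (a i) (a i) = 1.
    move=> i; apply: sdot; apply: hsph; rewrite (perm_mem hpa) mem_cat; apply/orP; left.
    by apply: map_f; exact: mem_enum.
  have hno : ~ (forall i j, dotv (a i) (a j) = (i == j)%:R).
    by move=> ho; apply: hnc; exists a.
  have [x [s [hx hs0 hsc hxa]]] := @key R d a d0 hn hno.
  have hs1 : s < c by [].
  have hs : -1 < s < 1 by apply/andP; split; lra.
  have hms : -1 < - s < 1 by apply/andP; split; lra.
  have hsum : (\sum_(y <- w) g (dotv x y) = (d%:R * (G s + G (- s)))%:E)%E.
    rewrite (@sum_decomp _ _ g _ _ _ hpa).
    rewrite (eq_bigr (fun _ => (G s + G (- s))%:E)); last first.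
      move=> k _; case: (hxa k) => ->; rewrite ?opprK (hgE s hs) (hgE (- s) hms) -EFinD //.
      by rewrite addrC.
    by rewrite sumEFin sumr_const card_ord mulr_natl.
  have hlt : d%:R * (G s + G (- s)) < d%:R * Fc.
    rewrite ltr_pM2l ?ltr0n //; exact: (@F_incr _ _ _ _ dG dG1 hpos s c hs0 hs1 c1).
  have : (polarization g w <= (d%:R * (G s + G (- s)))%:E)%E.
    by rewrite -hsum; apply: ereal_inf_lbound; exists x.
  by rewrite hP lee_fin leNgt hlt.
- move=> [a [ho hpa]].
  have hpar := @parseval R d a ho.
  apply/eqP; rewrite eq_le; apply/andP; split.
  + set x0 := c *: \sum_k a k.
    have hx0a : forall i, dotv x0 (a i) = c.
      move=> i; rewrite /x0 dotvZl dotv_suml (eq_bigr (fun k => 1 * (k == i)%:R)); last first.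
        by move=> k _; rewrite ho mul1r.
      by rewrite (@sum_delta _ _ (fun _ => 1) i) mulr1.
    have hx0 : dotv x0 x0 = 1.
      rewrite {1}/x0 dotvZl dotv_suml (eq_bigr (fun _ => c)); last first.
        by move=> k _; rewrite dotvC hx0a.
      by rewrite sumr_const card_ord -mulr_natr mulrA -expr2.
    apply: ereal_inf_lbound; exists x0 => //.
    rewrite (@sum_decomp _ _ g _ _ _ hpa) (eq_bigr (fun _ => Fc%:E)); last first.
      by move=> k _; rewrite hx0a (hgE c hc) (hgE (- c) hmc).
    by rewrite sumEFin sumr_const card_ord mulr_natl.
  + apply: le_ereal_inf_tmp => _ [x /sdot hx <-].
    rewrite (@sum_decomp _ _ g _ _ _ hpa).
    apply: (@le_trans _ _ (\sum_(k < d) ((Fc + K * (dotv x (a k) ^+ 2 - c ^+ 2))%:E))%E).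
      have e0 : \sum_(k < d) (dotv x (a k) ^+ 2 - c ^+ 2) = 0.
        by rewrite sumrB hpar hx sumr_const card_ord -mulr_natr cc subrr.
      rewrite sumEFin lee_fin big_split /= -mulr_sumr e0 mulr0 addr0.
      by rewrite sumr_const card_ord mulr_natl.
    apply: lee_sum => k _; apply: pt.
    have : dotv x (a k) ^+ 2 <= 1.
      rewrite -hx -hpar (bigD1 k) //= lerDl; apply: sumr_ge0 => i _; exact: sqr_ge0.
    by move=> h; apply/andP; split; nra.
Qed.
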